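(* Let $X$ be an observation whose distribution $P_\theta$ depends on a parameter $\theta\in\Theta$. Let $N=\{1,\dots,n\}$ index a family of null hypotheses $H_1,\dots,H_n$, each $H_i\subseteq\Theta$, with elementary test functions $\phi_1,\dots,\phi_n$ (each a $\{0,1\}$-valued function of $X$, $\phi_i=1$ meaning $H_i$ is rejected) and rejection regions $R_i=\{\phi_i=1\}$ in the sample space. Let $0<\alpha<1$. Suppose $\emptyset\neq I\subset N$, $\emptyset\neq J\subset N$, $I\cap J=\emptyset$, and $\bigcup_{i\in I}R_i\subseteq\bigcup_{j\in J}R_j$. For each $j\in J$ let $\phi^j=\{\phi_i^j: i\in N\setminus\{j\}\}$ be a multiple test (a collection of elementary test functions indexed by $N\setminus\{j\}$), and let $\phi^I=\{\phi_i^I: i\in N\setminus I\}$ be a multiple test indexed by $N\setminus I$. Define elementary test functions $\psi_i$, $i\in N$, by $$\psi_i=\begin{cases}\min\Big(\min_{j\in J,\ j\neq i}\phi_i^j,\ \phi_i^I\Big), & i\in N\setminus I,\\[4pt] \min\Big(\min_{j\in J}\phi_i^j,\ \max_{j\in J}\psi_j\Big), & i\in I,\end{cases}$$ (which is well defined since $J\subseteq N\setminus I$). If $\phi^j\in\Phi_\alpha(N\setminus\{j\})$ for every $j\in J$ and $\phi^I\in\Phi_\alpha(N\setminus I)$, then $\{\psi_i:i\in N\}\in\Phi_\alpha(N)$.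
   Context: For elementary test functions, $\min_{i\in S}\phi_i$ equals $1$ if $\phi_i=1$ for all $i\in S$ and $0$ otherwise (with the convention that a minimum over the empty set equals $1$), and $\max_{i\in S}\phi_i$ equals $1$ if $\phi_i=1$ for some $i\in S$ and $0$ otherwise. For $\emptyset\neq S\subseteq N$, $\Phi_\alpha(S)$ denotes the set of all multiple tests $\{\phi_i:i\in S\}$ for the hypotheses $\{H_i:i\in S\}$ that strongly control the familywise error rate at level $\alpha$, i.e. for every $\theta\in\Theta$, $P_\theta(\phi_i=1\text{ for some } i\in S \text{ with }\theta\in H_i)\le\alpha$; equivalently, for every nonempty $S'\subseteq S$ and every $\theta\in\bigcap_{i\in S'}H_i$, $P_\theta(\max_{i\in S'}\phi_i=1)\le\alpha$. *)

(* Defs.v *)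
From HB Require Import structures.
From mathcomp Require Import all_boot all_order all_algebra.
From mathcomp Require Import all_classical all_reals.
From mathcomp Require Import ereal measure probability.
Set Implicit Arguments. Unset Strict Implicit. Unset Printing Implicit Defensive.
Import Order.TTheory GRing.Theory Num.Theory.
Local Open Scope classical_set_scope.
Local Open Scope ring_scope.

(* Index set N = 'I_n; a multiple test indexed by S : {set 'I_n} is a family
   phi : 'I_n -> T -> bool (only the values at i \in S matter);
   phi i x = true means H_i is rejected on observation x. *)

(* Phi_alpha(S): strong FWER control at level alpha for the hypotheses H_i,
   i \in S.  Test functions are required to be measurable (rejection regions
   are events). *)
Definition Phi_alpha {R : realType} {d : measure_display} {T : measurableType d}
  {Theta : Type} {n : nat} (P : Theta -> probability T R)
  (H : 'I_n -> set Theta) (alpha : R) (S : {set 'I_n})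
  (phi : 'I_n -> T -> bool) : Prop :=
  (forall i, i \in S -> measurable [set x | phi i x]) /\
  (forall theta : Theta,
     (P theta [set x | exists i, [/\ i \in S, H i theta & phi i x]]
       <= alpha%:E)%E).

Definition psi_out {T : Type} {n : nat} (J : {set 'I_n})
  (phiJ : 'I_n -> 'I_n -> T -> bool) (phiI : 'I_n -> T -> bool)
  (i : 'I_n) (x : T) : bool :=
  [forall j in J, (j != i) ==> phiJ j i x] && phiI i x.

(* psi_i for i in N; for i in I uses max_{j in J} psi_j, where psi_j = psi_out j
   since J is contained in N \ I. *)
Definition psi {T : Type} {n : nat} (I J : {set 'I_n})
  (phiJ : 'I_n -> 'I_n -> T -> bool) (phiI : 'I_n -> T -> bool)
  (i : 'I_n) (x : T) : bool :=
  if i \in I then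
    [forall j in J, phiJ j i x] && [exists j in J, psi_out J phiJ phiI j x]
  else psi_out J phiJ phiI i x.

(* Main.v *)
Require Import Defs.
From HB Require Import structures.
From mathcomp Require Import all_boot all_order all_algebra.
From mathcomp Require Import all_classical all_reals.
From mathcomp Require Import ereal measure probability.
Import Order.TTheory GRing.Theory Num.Theory.
Local Open Scope classical_set_scope.
Local Open Scope ring_scope.

Section Helpers.
Context {d : measure_display} {T : measurableType d} {n : nat}.

Lemma m_exists (F : 'I_n -> set T) :
  (forall i, measurable (F i)) -> measurable [set x | exists i, F i x].
Proof.
move=> mF.
have -> : [set x | exists i, F i x] = \bigcup_i F i.
  by apply/seteqP; split => x /= [i]; [exists i | move=> _ Fi; exists i].
exact: countable_bigcupT_measurable.
Qed.

Lemma m_existsb (b : 'I_n -> bool) (f : 'I_n -> T -> bool) :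
  (forall j, b j -> measurable [set x | f j x]) ->
  measurable [set x | [exists j, b j && f j x]].
Proof.
move=> mf.
have -> : [set x | [exists j, b j && f j x]] =
   [set x | exists j, (if b j then [set y | f j y] else set0) x].
  apply/seteqP; split => x /=.
    by move=> /existsP[j /andP[bj fj]]; exists j; rewrite bj.
  by move=> [j]; case bj: (b j) => //= fj; apply/existsP; exists j; rewrite bj.
apply: m_exists => j; case bj: (b j); [exact: mf | exact: measurable0].
Qed.

Lemma m_forallb (b : 'I_n -> bool) (f : 'I_n -> T -> bool) :
  (forall j, b j -> measurable [set x | f j x]) ->
  measurable [set x | [forall j, b j ==> f j x]].
Proof.
move=> mf.
have -> : [set x | [forall j, b j ==> f j x]] =
   ~` [set x | [exists j, b j && ~~ f j x]].
  apply/seteqP; split => x /=.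
    move=> /forallP H /existsP[j /andP[bj nf]].
    by move: (H j) nf; rewrite bj /= => ->.
  move=> H; apply/forallP => j; apply/implyP => bj.
  case fj: (f j x) => //; exfalso; apply: H; apply/existsP; exists j.
  by rewrite bj fj.
apply: measurableC; apply: m_existsb => j bj.
have -> : [set x | ~~ f j x] = ~` [set x | f j x].
  by apply/seteqP; split => x /=; case: (f j x).
exact/measurableC/mf.
Qed.

Lemma m_andb (f g : T -> bool) :
  measurable [set x | f x] -> measurable [set x | g x] ->
  measurable [set x | f x && g x].
Proof.
move=> mf mg.
have -> : [set x | f x && g x] = [set x | f x] `&` [set x | g x].
  by apply/seteqP; split => x /=; [move/andP | move=> [-> ->]].
exact: measurableI.
Qed.

Lemma m_fwer {Theta : Type} (H : 'I_n -> set Theta) theta (S : {set 'I_n})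
  (phi : 'I_n -> T -> bool) :
  (forall i, i \in S -> measurable [set x | phi i x]) ->
  measurable [set x | exists i, [/\ i \in S, H i theta & phi i x]].
Proof.
move=> mphi; apply: m_exists => i.
have [iS|iS] := boolP (i \in S); last first.
  rewrite (_ : (fun x : T => _) = set0); first exact: measurable0.
  by apply/seteqP; split => x //= [].
case: (pselect (H i theta)) => Hi.
  rewrite (_ : (fun x : T => _) = [set x | phi i x]); first exact: mphi.
  by apply/seteqP; split => x /=; [case | ].
rewrite (_ : (fun x : T => _) = set0); first exact: measurable0.
by apply/seteqP; split => x // [].
Qed.

End Helpers.

Theorem theorem1 (R : realType) (d : measure_display) (T : measurableType d)
  (Theta : Type) (n : nat) (P : Theta -> probability T R)
  (H : 'I_n -> set Theta) (phi : 'I_n -> T -> bool) (alpha : R)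
  (I J : {set 'I_n})
  (phiJ : 'I_n -> 'I_n -> T -> bool) (phiI : 'I_n -> T -> bool) :
  0 < alpha < 1 ->
  I != finset.set0 -> J != finset.set0 -> finset.setI I J = finset.set0 ->
  [set x | exists i, i \in I /\ phi i x] `<=` [set x | exists j, j \in J /\ phi j x] ->
  (forall j, j \in J -> Phi_alpha P H alpha (finset.setC (finset.set1 j)) (phiJ j)) ->
  Phi_alpha P H alpha (finset.setC I) phiI ->
  Phi_alpha P H alpha (finset.setTfor 'I_n) (psi I J phiJ phiI).
Proof.
move=> _ _ _ IJ _ hJ [mI cI].
have disj : forall i j, i \in I -> j \in J -> i != j.
  move=> i j iI jJ; apply/eqP => eij; subst j.
  by move/setP: IJ => /(_ i); rewrite !inE iI jJ.
have mout : forall i, i \notin I -> measurable [set x | psi_out J phiJ phiI i x].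
  move=> i iI; apply: m_andb; last by apply: mI; rewrite inE.
  apply: m_forallb => j jJ.
  case: (eqVneq j i) => [->|ji] /=.
    rewrite (_ : (fun x : T => _) = setT); first exact: measurableT.
    by apply/seteqP; split => x //= _; rewrite eqxx.
  have [mJ _] := hJ j jJ.
  by apply: mJ; rewrite !inE eq_sym.
have mpsi : forall i, measurable [set x | psi I J phiJ phiI i x].
  move=> i; rewrite /psi.
  case iI: (i \in I); last by apply: mout; rewrite iI.
  apply: m_andb.
    apply: m_forallb => j jJ; have [mJ _] := hJ j jJ.
    by apply: mJ; rewrite !inE disj.
  apply: m_existsb => j jJ; apply: mout.
  by apply/negP => jI; move: (disj _ _ jI jJ); rewrite eqxx.
split; first by move=> i _; exact: mpsi.
move=> theta.
case: (pselect (exists j, j \in J /\ ~ H j theta)) => [[j [jJ nHj]]|nex].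
  have [mJ cJ] := hJ j jJ.
  apply: le_trans (cJ theta).
  apply: le_measure; rewrite ?inE.
  - by apply: m_fwer => i _; exact: mpsi.
  - exact: m_fwer.
  move=> x /= [i [_ Hi ps]]; exists i; split => //.
    rewrite !inE; apply/eqP => eij; subst i; exact: nHj.
  move: ps; rewrite /psi; case: (i \in I).
    by move=> /andP[/forallP /(_ j) + _]; rewrite jJ.
  move=> /andP[/forallP /(_ j) + _]; rewrite jJ /=.
  have -> : (j != i) by apply/eqP => eij; subst i; exact: nHj.
  by [].
have hall : forall j, j \in J -> H j theta.
  move=> j jJ; case: (pselect (H j theta)) => // nHj; exfalso.
  by apply: nex; exists j.
apply: le_trans (cI theta).
apply: le_measure; rewrite ?inE.
- by apply: m_fwer => i _; exact: mpsi.
- exact: m_fwer.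
move=> x /= [i [_ Hi ps]]; move: ps; rewrite /psi.
case iI: (i \in I).
  move=> /andP[_ /existsP[j /andP[jJ /andP[_ pj]]]].
  exists j; split => //; last exact: hall.
  by rewrite inE; apply/negP => jI; move: (disj _ _ jI jJ); rewrite eqxx.
move=> /andP[_ pi]; exists i; split => //.
by rewrite inE iI.
Qed.
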